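(* Let $A=\{v_1,v_2,\dots,v_n\}$ be a set of $n\geq 1$ distinct integers, and let $Y_1,Y_2,Y_3$ be independent random variables, each uniformly distributed on $A$. Set $Y=Y_1+Y_2+Y_3$. Then $$\max_{x\in \mathbb{Z}} \mathbb{P}[Y=x]\leq\frac{3+1/n^2}{4n}.$$ *)

(* Defs.v *)
From mathcomp Require Import all_boot all_order all_algebra.
Set Implicit Arguments. Unset Strict Implicit. Unset Printing Implicit Defensive.
Import Order.TTheory GRing.Theory Num.Theory.
Local Open Scope ring_scope.

(* Probability mass function of the uniform distribution on the finite set
   of integers A (given as a duplicate-free sequence): 1/|A| on A, 0 off A. *)
Definition unif_pmf (A : seq int) (a : int) : rat :=
  if a \in A then (size A)%:R^-1 else 0.

(* P[Y1 + Y2 + Y3 = x] for Y1, Y2, Y3 independent, each uniform on A: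
   by independence the joint pmf is the product of the marginal pmfs, and
   the event {Y = x} is summed over the (finite) support A^3. *)
Definition prob_sum3_eq (A : seq int) (x : int) : rat :=
  \sum_(a <- A) \sum_(b <- A) \sum_(c <- A)
     (if a + b + c == x then unif_pmf A a * unif_pmf A b * unif_pmf A c else 0).

(* Main.v *)
Require Import Defs.
From mathcomp Require Import all_boot all_order all_algebra.
From mathcomp Require Import zify ring lra.
Import Order.TTheory GRing.Theory Num.Theory.
Local Open Scope ring_scope.
Lemma chain_lemma (D : int) (s : seq int) : 0 < D -> sorted (fun u v => v < u) s ->
  forall W : seq int, uniq W -> {subset W <= s} ->
  (forall w w', w \in W -> w' \in W -> (exists q : int, w - w' = q * D) -> w = w') ->
  (count (fun b : int => (b - D)%R \in s) s + size W <= size s)%N.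
Proof.
move=> D0; elim: s => [|a s IH] Hs W Wu Ws Wr.
  case: W Wu Ws Wr => [|w W] //= _ Ws _.
  by have := Ws w; rewrite !inE eqxx => /(_ isT).
have Hs' : sorted (fun u v => v < u) s by exact: path_sorted Hs.
have Hall : all (fun v => v < a) s.
  by apply: (order_path_min _ Hs) => x y z /= h1 h2; exact: lt_trans h2 h1.
have Hlt : forall b, b \in s -> b < a by move=> b /(allP Hall).
have Ecnt : count (fun b => b - D \in a :: s) s = count (fun b => b - D \in s) s.
  apply: eq_in_count => b Hb /=; rewrite inE.
  have : b - D != a by apply/eqP => E; have := Hlt b Hb; lia.
  by move=> /negbTE ->.
have EaD : (a - D \in a :: s) = (a - D \in s).
  by rewrite inE; have -> : (a - D == a) = false by apply/eqP; lia.
rewrite /= Ecnt EaD.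
have Hsub : forall w, w \in W -> w != a -> w \in s.
  by move=> w /Ws; rewrite inE => /orP [/eqP -> /eqP //| ].
case: (boolP (a \in W)) => aW.
- case: (boolP (a - D \in s)) => aDs.
  + have Hrem : {subset rem a W <= W} by apply: mem_subseq; exact: rem_subseq.
    have Hremne : forall w, w \in rem a W -> w != a.
      by move=> w; rewrite (mem_rem_uniq _ Wu) inE => /andP [].
    have aDW : a - D \notin W.
      apply/negP => h; have E : a = a - D by apply: (Wr _ _ aW h); exists 1; ring.
      lia.
    have := IH Hs' ((a - D) :: rem a W).
    rewrite /= size_rem //.
    have -> : uniq (rem a W) by exact: rem_uniq.
    have -> : a - D \notin rem a W by apply: contra aDW; exact: Hrem.
    move=> /(_ isT) H; have: (count (fun b : int => (b - D)%R \in s) s + (size W).-1.+1 <= size s)%N.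
      apply: H.
        move=> w; rewrite inE => /orP [/eqP -> //|h]; apply: Hsub; [exact: Hrem | exact: Hremne].
      move=> w w'; rewrite !inE => /orP [/eqP ->|h1] /orP [/eqP ->|h2] //.
      * move=> [q Hq]; have h2' := Hrem _ h2.
        have E : a = w' by apply: (Wr _ _ aW h2'); exists (q + 1); lia.
        by move: (Hremne _ h2); rewrite -E eqxx.
      * move=> [q Hq]; have h1' := Hrem _ h1.
        have E : w = a by apply: (Wr _ _ h1' aW); exists (q - 1); lia.
        by move: (Hremne _ h1); rewrite E eqxx.
      * by apply: Wr; apply: Hrem.
    have : (0 < size W)%N by case: (W) aW.
    case: (size W) => //= m _; lia.
  + have Hrem : {subset rem a W <= W} by apply: mem_subseq; exact: rem_subseq.
    have Hremne : forall w, w \in rem a W -> w != a.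
      by move=> w; rewrite (mem_rem_uniq _ Wu) inE => /andP [].
    have := IH Hs' (rem a W) (rem_uniq _ Wu).
    rewrite size_rem //.
    move=> H; have : (count (fun b : int => (b - D)%R \in s) s + (size W).-1 <= size s)%N.
      apply: H.
        by move=> w h; apply: Hsub; [exact: Hrem | exact: Hremne].
      by move=> w w' h1 h2; apply: Wr; apply: Hrem.
    rewrite add0n => H2; have : (0 < size W)%N by case: (W) aW.
    move: H2; case: (size W) => //= m; set c := count _ s; lia.
- have := IH Hs' W Wu.
  move=> H; have : (count (fun b : int => (b - D)%R \in s) s + size W <= size s)%N.
    apply: H => //.
    by move=> w h; apply: Hsub => //; apply: contraNneq aW => <-.
  set c := count _ s; case: (a - D \in s) => /=; lia.
Qed.

Lemma Qbound (A : seq int) (y D : int) : uniq A ->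
  (count (fun b : int => ((y - b)%R \in A) && ((y - D - b)%R \in A)) A
     <= count (fun b : int => (b - D)%R \in A) A)%N.
Proof.
move=> Au; rewrite -!size_filter.
have -> : size [seq b <- A | ((y - b)%R \in A) && ((y - D - b)%R \in A)] =
    size [seq c <- [seq (y - b)%R | b <- A] | (c \in A) && ((c - D)%R \in A)].
  rewrite filter_map size_map; congr size; apply: eq_filter => b /=.
  by rewrite (_ : y - b - D = y - D - b) //; ring.
apply: uniq_leq_size.
  rewrite filter_uniq // map_inj_uniq // => b b' h; lia.
move=> c; rewrite !mem_filter => /andP [/andP [h1 h2] _]; by rewrite h2 h1.
Qed.

Lemma pair_bound (A : seq int) (x : int) (k k' : nat) : uniq A -> (k < k')%N -> (k' < size A)%N ->
  (count (fun b : int => (x - nth 0 (sort <=%O A) k - b)%R \in A) A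
   + count (fun b : int => (x - nth 0 (sort <=%O A) k' - b)%R \in A) A + (k' - k) <= 2 * size A)%N.
Proof.
move=> Au kk' k'n.
set s := sort <=%O A.
have ss : sorted <%R s by rewrite /s sort_lt_sorted.
have sz : size s = size A by rewrite size_sort.
have sp : perm_eq s A by rewrite /s perm_sort.
have su : uniq s by rewrite /s sort_uniq.
have ltn_s : forall i j, (i < j)%N -> (j < size A)%N -> nth 0 s i < nth 0 s j.
  move=> i j ij jn; apply: (sorted_ltn_nth lt_trans 0 ss); rewrite ?inE /= ?sz //.
  exact: ltn_trans ij jn.
set v := nth 0 s k; set v' := nth 0 s k'.
have vv : v < v' by apply: ltn_s.
set D := v' - v.
have D0 : 0 < D by rewrite /D subr_gt0.
set P1 := (fun b : int => (x - v - b)%R \in A).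
set P2 := (fun b : int => (x - v' - b)%R \in A).
have st1 : (count P1 A + count P2 A <= size A + count (predI P1 P2) A)%N.
  rewrite -count_predUI leq_add2r; exact: count_size.
have st2 : (count (predI P1 P2) A <= count (fun b : int => (b - D)%R \in A) A)%N.
  have := Qbound A (x - v) D Au.
  congr (_ <= _)%N; apply: eq_count => b /=.
  by rewrite /P1 /P2 (_ : x - v - D - b = x - v' - b) // /D; ring.
have st3 : (count (fun b : int => (b - D)%R \in A) A + (k' - k) <= size A)%N.
  have rs : sorted (fun u v => v < u) (rev s) by rewrite rev_sorted.
  have := @chain_lemma D (rev s) D0 rs [seq nth 0 s i | i <- iota k.+1 (k' - k)].
  rewrite size_rev size_map size_iota sz.
  have -> : count (fun b : int => (b - D)%R \in rev s) (rev s) = count (fun b : int => (b - D)%R \in A) A.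
    rewrite count_rev (permP sp); apply: eq_count => b; by rewrite mem_rev (perm_mem sp).
  have Hi : forall i, i \in iota k.+1 (k' - k) -> (k < i /\ i <= k')%N.
    move=> i; rewrite mem_iota => /andP [h1 h2]; split => //; lia.
  apply.
  - rewrite map_inj_in_uniq ?iota_uniq // => i j hi hj /eqP.
    have [_ hi'] := Hi i hi; have [_ hj'] := Hi j hj.
    have hi2 : (i < size s)%N by rewrite sz; lia.
    have hj2 : (j < size s)%N by rewrite sz; lia.
    by rewrite nth_uniq // => /eqP.
  - move=> w /mapP [i hi ->]; rewrite mem_rev mem_nth // sz.
    have [_ hi'] := Hi i hi; lia.
  - move=> w w' /mapP [i hi ->] /mapP [j hj ->] [q Hq].
    have [hi1 hi2] := Hi i hi; have [hj1 hj2] := Hi j hj.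
    have bnd : forall l, (k < l)%N -> (l <= k')%N -> v < nth 0 s l <= v'.
      move=> l h1 h2; rewrite ltn_s //=; last lia.
      move: h2; rewrite leq_eqVlt => /orP [/eqP -> //|h2].
      by apply/ltW; apply: ltn_s.
    have := bnd i hi1 hi2; have := bnd j hj1 hj2; rewrite /D in Hq D0 *.
    move: Hq; set a := nth 0 s i; set b := nth 0 s j => Hq /andP [b1 b2] /andP [a1 a2].
    have q0 : q = 0 by nia.
    move: Hq; rewrite q0 mul0r; lia.
move: st1 st2 st3; rewrite -/P1 -/P2; lia.
Qed.

Definition fS (n i : nat) : nat := ((n.-1 - i) - i + (i - (n.-1 - i)))%N.

Lemma Slem n : (n * n <= 2 * \sum_(0 <= i < n) fS n i + 1)%N.
Proof.
suff H : forall n, (n * n <= 2 * \sum_(0 <= i < n) fS n i + 1)%N /\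
                   (n.+1 * n.+1 <= 2 * \sum_(0 <= i < n.+1) fS n.+1 i + 1)%N by case: (H n).
elim=> [|k [IH1 IH2]]; first by rewrite !big_nat_recl // !big_geq.
split => //.
rewrite big_nat_recl // big_nat_recr //=.
have -> : \sum_(0 <= i < k) fS k.+2 i.+1 = \sum_(0 <= i < k) fS k i.
  by apply: eq_big_nat => i /andP [_ hi]; rewrite /fS /=; lia.
move: IH1; set S := \sum_(0 <= i < k) fS k i; rewrite /fS /=; lia.
Qed.

Lemma sum_count (s : seq int) (P : pred int) (r : rat) :
  (\sum_(c <- s) ((P c : nat)%:R * r) = (count P s)%:R * r)%R.
Proof.
elim: s => [|c s IH]; first by rewrite big_nil mul0r.
by rewrite big_cons IH /= natrD mulrDl.
Qed.

Theorem theorem2p4 (n : nat) (A : seq int) :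
  (1 <= n)%N -> uniq A -> size A = n ->
  forall x : int,
    prob_sum3_eq A x <= (3 + (n%:R ^+ 2)^-1) / (4 * n%:R) :> rat.
Proof.
move=> n1 Au szA x.
set m := fun a : int => count (fun b : int => (x - a - b)%R \in A) A.
set N := (\sum_(a <- A) m a)%N.
set r := (n%:R : rat)^-1.
have stepA : prob_sum3_eq A x = N%:R * (r * r * r).
  rewrite /prob_sum3_eq.
  transitivity (\sum_(a <- A) \sum_(b <- A) \sum_(c <- A)
                  ((a + b + c == x : nat)%:R * (r * r * r))).
    apply: eq_big_seq => a ha; apply: eq_big_seq => b hb; apply: eq_big_seq => c hc.
    by rewrite /unif_pmf ha hb hc szA; case: (_ == _); rewrite ?mul1r ?mul0r.
  rewrite /N natr_sum mulr_suml; apply: eq_big_seq => a ha.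
  transitivity (\sum_(b <- A) (((x - a - b)%R \in A : nat)%:R * (r * r * r))).
    apply: eq_big_seq => b hb; rewrite sum_count.
    congr (_%:R * _).
    rewrite -(count_uniq_mem _ Au); apply: eq_count => c /=.
    by apply/eqP/eqP; lia.
  by rewrite sum_count.
have stepB : (4 * N <= 3 * n * n + 1)%N.
  set s := sort <=%O A.
  have sp : perm_eq A s by rewrite perm_sym /s perm_sort.
  have sz : size s = n by rewrite size_sort.
  set F := fun i : nat => count (fun b : int => (x - nth 0 s i - b)%R \in A) A.
  have EN : N = (\sum_(0 <= i < n) F i)%N.
    by rewrite /N (perm_big _ sp) (big_nth 0) sz.
  have E2 : (2 * N = \sum_(0 <= i < n) (F i + F (n - i.+1)))%N.
    have R : (\sum_(0 <= i < n) F (n - i.+1) = \sum_(0 <= i < n) F i)%N.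
      by rewrite [RHS]big_nat_rev /= add0n.
    by rewrite big_split /= R EN mul2n addnn.
  have Fle : forall i, (F i <= n)%N by move=> i; rewrite /F -szA count_size.
  have B : (\sum_(0 <= i < n) (F i + F (n - i.+1) + fS n i) <= \sum_(0 <= i < n) (2 * n))%N.
    rewrite big_nat_cond [X in (_ <= X)%N]big_nat_cond; apply: leq_sum => i /andP [/andP [_ hi] _].
    have e1 : (n - i.+1 = n.-1 - i)%N by lia.
    case: (ltngtP i (n - i.+1)) => hij.
    - have := pair_bound A x i (n - i.+1) Au hij (_ : (n - i.+1 < size A)%N).
      rewrite szA; move=> /(_ ltac:(lia)); rewrite /F /s /fS ?szA; lia.
    - have := pair_bound A x (n - i.+1) i Au hij (_ : (i < size A)%N).
      rewrite szA; move=> /(_ hi); rewrite /F /s /fS ?szA; lia.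
    - have := Fle i; have := Fle (n - i.+1)%N; rewrite /fS; lia.
  move: B; rewrite big_split /= -E2 sum_nat_const_nat subn0 => B.
  have := Slem n; lia.
rewrite stepA.
have n0 : (0 < n%:R :> rat) by rewrite ltr0n.
have -> : (3 + (n%:R ^+ 2)^-1) / (4 * n%:R) = (3 * n%:R^+2 + 1) * (r * r * r) / 4 :> rat.
  rewrite /r; field; rewrite pnatr_eq0; lia.
have -> : N%:R * (r * r * r) = (4 * N)%:R * (r * r * r) / 4 :> rat.
  by rewrite natrM; field.
rewrite ler_pM2r ?invr_gt0 ?ltr0n //.
have r0 : 0 < r by rewrite /r invr_gt0.
rewrite ler_pM2r ?mulr_gt0 //.
have : ((4 * N)%:R <= (3 * n * n + 1)%N%:R :> rat) by rewrite ler_nat.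
by rewrite natrD !natrM expr2 mulrA.
Qed.
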